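(* Let $D$ be a finite domain in $\mathbb{Z}^2$ and let $\mathcal{S}$ be a finite collection of paths in $D$ such that each path starts and ends on $\partial D$ and no two paths of $\mathcal{S}$ have an essential crossing. Then there is a path of total length at most $1.5\,|\partial D|+\sum_{P\in\mathcal{S}}|P|$ whose image is obtained from the union of the images of the paths in $\mathcal{S}$ by adding connecting segments along the perimeter of $D$.
   Context: Paths are paths in the standard Cayley graph of $\mathbb{Z}^2$ with generators $e_1,e_2$; $|P|$ is the length of $P$; $\partial D$ is the boundary of $D$, viewed as a closed curve. For a path $P_i$ write $A_i$ for its start and $B_i$ for its end. Two paths $P_1,P_2$ with endpoints on $\partial D$ have an essential crossing if $A_2$ and $B_2$ lie in the two different open arcs of $\partial D$ between $A_1$ and $B_1$. *)

(* Defs.v *)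
From mathcomp Require Import all_boot all_order all_algebra.
Set Implicit Arguments. Unset Strict Implicit. Unset Printing Implicit Defensive.
Import Order.TTheory GRing.Theory Num.Theory.

Local Open Scope ring_scope.
Definition pt := (int * int)%type.

Definition adj (p q : pt) : bool :=
  (absz (p.1 - q.1) + absz (p.2 - q.2) == 1)%N.

Definition is_path (P : seq pt) : bool :=
  if P is x :: s then path adj x s else false.

Definition len (P : seq pt) : nat := (size P).-1.

Definition startp (P : seq pt) : pt := head (0, 0) P.
Definition endp (P : seq pt) : pt := last (0, 0) P.

Definition steps (P : seq pt) : seq (pt * pt) := zip P (behead P).

Definition path_edge (P : seq pt) (u v : pt) : bool :=
  ((u, v) \in steps P) || ((v, u) \in steps P).

(* A boundary curve: a simple closed lattice curve given as the cyclic
   sequence c of its (distinct) vertices; its edges are (c_i, c_{i+1 mod n}). *)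
Definition simple_closed_curve (c : seq pt) : bool :=
  [&& (2 < size c)%N, uniq c & cycle adj c].

Definition curve_edges (c : seq pt) : seq (pt * pt) := zip c (rot 1 c).

Definition curve_edge (c : seq pt) (u v : pt) : bool :=
  ((u, v) \in curve_edges c) || ((v, u) \in curve_edges c).

(* |boundary| = number of edges of the closed curve. *)
Definition curve_len (c : seq pt) : nat := size c.

(* Interior of the curve (Jordan, parity of crossings): a lattice point p not
   on c is inside iff the horizontal ray {(p.1 + t, p.2 + 1/2) | t >= 0}
   crosses an odd number of edges of c; the crossed edges are exactly the
   vertical edges {(a, p.2), (a, p.2 + 1)} of c with a > p.1. *)
Definition crosses_ray (p : pt) (e : pt * pt) : bool :=
  let: (u, v) := e in
  [&& u.1 == v.1, p.1 < u.1 &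
      ((u.2 == p.2) && (v.2 == p.2 + 1)) || ((v.2 == p.2) && (u.2 == p.2 + 1))].

Definition inside (c : seq pt) (p : pt) : bool :=
  (p \notin c) && odd (count (crosses_ray p) (curve_edges c)).

Definition domain (c : seq pt) (p : pt) : bool := (p \in c) || inside c p.

Definition path_in (c : seq pt) (P : seq pt) : bool :=
  is_path P && all (domain c) P.

(* Cyclic order on positions 0..n-1 of the boundary: k lies strictly inside
   the open arc going forward from position a to position b. *)
Definition strictly_between (n a b k : nat) : bool :=
  let d := fun j => ((j + n - a) %% n)%N in
  (0 < d k < d b)%N.

(* Essential crossing of P1, P2 (endpoints on the boundary c): A2 and B2
   lie in the two different open arcs of the boundary between A1 and B1. *)
Definition essential_crossing (c : seq pt) (P1 P2 : seq pt) : bool :=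
  let n := size c in
  let a := index (startp P1) c in
  let b := index (endp P1) c in
  let a2 := index (startp P2) c in
  let b2 := index (endp P2) c in
  (a != b) &&
  ((strictly_between n a b a2 && strictly_between n b a b2) ||
   (strictly_between n b a a2 && strictly_between n a b b2)).

(* Main.v *)
Require Import Defs.
From mathcomp Require Import all_boot all_order all_algebra.
From mathcomp Require Import zify lra.
Import Order.TTheory GRing.Theory Num.Theory.


Lemma stepsS (a b : pt) s : steps (a :: b :: s) = (a, b) :: steps (b :: s).
Proof. by []. Qed.

Lemma steps_cat a A B :
  steps (a :: A ++ B) = steps (a :: A) ++ steps (last a A :: B).
Proof.
elim: A a => [|b A IH] a /=; first by case: B.
by rewrite stepsS IH.
Qed.

Definition join (A B : seq pt) := A ++ behead B.

Lemma adjC p q : adj p q = adj q p.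
Proof. by rewrite /adj -[(p.1 - q.1)%R]opprB -[(p.2 - q.2)%R]opprB !abszN. Qed.

Section Join.
Variables (a b : pt) (A B : seq pt).
Hypothesis hab : last a A = b.

Lemma join_path : is_path (a :: A) -> is_path (b :: B) -> is_path (join (a :: A) (b :: B)).
Proof. by rewrite /is_path /join /= cat_path hab => -> ->. Qed.

Lemma join_len : len (join (a :: A) (b :: B)) = (len (a :: A) + len (b :: B))%N.
Proof. by rewrite /len /join /= size_cat. Qed.

Lemma join_mem x : (x \in join (a :: A) (b :: B)) = (x \in a :: A) || (x \in b :: B).
Proof.
rewrite /join /= -cat_cons mem_cat [x \in b :: B]in_cons.
case: (x =P b) => [->|_]; last by [].
by rewrite -hab mem_last.
Qed.

Lemma join_edge u v : path_edge (join (a :: A) (b :: B)) u v =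
  path_edge (a :: A) u v || path_edge (b :: B) u v.
Proof.
rewrite /path_edge /join /= steps_cat hab !mem_cat.
by case: ((u, v) \in _); case: ((v, u) \in _); case: ((u, v) \in _); case: ((v, u) \in _).
Qed.

Lemma join_start : startp (join (a :: A) (b :: B)) = a.
Proof. by []. Qed.

Lemma join_end : endp (join (a :: A) (b :: B)) = endp (b :: B).
Proof. by rewrite /endp /join /= last_cat hab. Qed.

End Join.

Lemma steps_rcons a s x : steps (rcons (a :: s) x) = rcons (steps (a :: s)) (last a s, x).
Proof. by rewrite -cats1 steps_cat cats1. Qed.

Lemma rev_steps P u v : ((u, v) \in steps (rev P)) = ((v, u) \in steps P).
Proof.
elim/last_ind: P => [//|s x IH].
rewrite rev_rcons.
case: s IH => [|a s] IH; first by [].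
rewrite steps_rcons mem_rcons in_cons.
have -> : rev (a :: s) = last a s :: rev (belast a s) by rewrite lastI rev_rcons.
rewrite stepsS in_cons.
have <- : rev (a :: s) = last a s :: rev (belast a s) by rewrite lastI rev_rcons.
by rewrite IH !xpair_eqE andbC.
Qed.

Lemma rev_edge P u v : path_edge (rev P) u v = path_edge P u v.
Proof. by rewrite /path_edge !rev_steps orbC. Qed.

Lemma rev_is_path P : is_path P -> is_path (rev P).
Proof.
case: P => [//|a P] /=.
move=> H; rewrite (lastI a P) rev_rcons /= rev_path.
by rewrite (@eq_path _ _ adj) // => x y; exact: adjC.
Qed.

Lemma rev_len P : len (rev P) = len P.
Proof. by rewrite /len size_rev. Qed.

Lemma rev_start P : startp (rev P) = endp P.
Proof.
case: P => [//|a P]; rewrite /startp /endp.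
by rewrite [in LHS](lastI a P) rev_rcons.
Qed.

Lemma rev_end P : endp (rev P) = startp P.
Proof. case: P => [//|a P]; by rewrite /startp /endp rev_cons last_rcons. Qed.

Section JoinW.
Variables A B : seq pt.
Hypotheses (hA : A != [::]) (hB : B != [::]) (hAB : endp A = startp B).

Lemma joinW_path : is_path A -> is_path B -> is_path (join A B).
Proof. by case: A B hA hB hAB => [|a A'] [|b B'] //= _ _ h; apply: join_path. Qed.
Lemma joinW_path_inv : is_path (join A B) -> is_path A /\ is_path B.
Proof.
case: A B hA hB hAB => [|a A'] [|b B'] //= _ _ h.
by rewrite /is_path /join /= cat_path => /andP[-> ]; rewrite /endp /= in h; rewrite h.
Qed.
Lemma joinW_len : len (join A B) = (len A + len B)%N.
Proof. by case: A B hA hB hAB => [|a A'] [|b B'] //= _ _ h; apply: join_len. Qed.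
Lemma joinW_mem x : (x \in join A B) = (x \in A) || (x \in B).
Proof. by case: A B hA hB hAB => [|a A'] [|b B'] //= _ _ h; apply: join_mem. Qed.
Lemma joinW_edge u v : path_edge (join A B) u v = path_edge A u v || path_edge B u v.
Proof. by case: A B hA hB hAB => [|a A'] [|b B'] //= _ _ h; apply: join_edge. Qed.
Lemma joinW_start : startp (join A B) = startp A.
Proof. by case: A B hA hB hAB => [|a A'] [|b B'] //= _ _ h. Qed.
Lemma joinW_end : endp (join A B) = endp B.
Proof. by case: A B hA hB hAB => [|a A'] [|b B'] //= _ _ h; apply: join_end. Qed.
Lemma joinW_nil : join A B != [::].
Proof. by case: A hA. Qed.
End JoinW.
Arguments joinW_path {A B}.
Arguments joinW_path_inv {A B}.
Arguments joinW_len {A B}.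
Arguments joinW_mem {A B}.
Arguments joinW_edge {A B}.
Arguments joinW_start {A B}.
Arguments joinW_end {A B}.
Arguments joinW_nil {A B}.

Lemma split_join (Q1 Q2 : seq pt) x : Q1 ++ x :: Q2 = join (rcons Q1 x) (x :: Q2).
Proof. by rewrite /join /= cat_rcons. Qed.

Section Curve.
Variable c : seq pt.
Hypothesis Hc : simple_closed_curve c.
Local Notation n := (size c).
Definition p0 : pt := (0%R, 0%R).
Local Notation cc i := (nth p0 c (i %% size c)).

Lemma n_gt0 : (0 < n)%N.
Proof. by case/and3P: Hc => /ltnW /ltnW. Qed.

Lemma cc_mem i : cc i \in c.
Proof. by apply: mem_nth; rewrite ltn_mod n_gt0. Qed.

Lemma rot1_nth x0 i : (i < n)%N -> nth x0 (rot 1 c) i = nth x0 c (i.+1 %% n).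
Proof.
case: c => [//|x c'] /= hi; rewrite rot1_cons nth_rcons.
have [h|h|->] := ltngtP i (size c').
- by rewrite modn_small.
- by rewrite ltnNge in hi; rewrite h in hi.
- by rewrite modnn.
Qed.

Lemma cc_adj i : adj (cc i) (cc i.+1).
Proof.
have hj : (i %% n < n)%N by rewrite ltn_mod n_gt0.
have -> : (i.+1 %% n = (i %% n).+1 %% n)%N by rewrite -addn1 -modnDml addn1.
move: hj; move: (i %% n)%N => j hj.
case/and3P: Hc => _ _.
case E: c hj => [//|x c'] hj /=.
move/(pathP p0) => /(_ j).
rewrite size_rcons -E => /(_ hj).
have -> : nth p0 (x :: rcons c' x) j = nth p0 c j.
  by rewrite -rcons_cons nth_rcons E /= -E hj.
by rewrite -rot1_cons -E rot1_nth ?E.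
Qed.

Lemma cc_edge i : curve_edge c (cc i) (cc i.+1).
Proof.
have hj : (i %% n < n)%N by rewrite ltn_mod n_gt0.
have -> : (i.+1 %% n = (i %% n).+1 %% n)%N by rewrite -addn1 -modnDml addn1.
move: hj; move: (i %% n)%N => j hj.
apply/orP; left.
have <- : nth (p0,p0) (curve_edges c) j = (nth p0 c j, nth p0 c (j.+1 %% n)).
  by rewrite /curve_edges nth_zip ?size_rot // rot1_nth.
by apply: mem_nth; rewrite /curve_edges size_zip size_rot minnn.
Qed.

Fixpoint carc (i d : nat) : seq pt :=
  if d is d'.+1 then cc i :: carc i.+1 d' else [:: cc i].

Lemma carc_head i d : carc i d = cc i :: behead (carc i d).
Proof. by case: d. Qed.

Lemma carc_path i d : is_path (carc i d).
Proof.
elim: d i => [|d IH] i //=.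
rewrite carc_head /= cc_adj /=.
by have := IH i.+1; rewrite carc_head.
Qed.

Lemma carc_len i d : len (carc i d) = d.
Proof.
suff h : size (carc i d) = d.+1 by rewrite /len h.
by elim: d i => [|d IH] i //=; rewrite IH.
Qed.

Lemma carc_start i d : startp (carc i d) = cc i.
Proof. by case: d. Qed.

Lemma carc_end i d : endp (carc i d) = cc (i + d).
Proof.
elim: d i => [|d IH] i /=; first by rewrite addn0.
rewrite /endp /= [carc i.+1 d]carc_head /=.
by have := IH i.+1; rewrite /endp [carc i.+1 d]carc_head /= => ->; rewrite addSnnS.
Qed.

Lemma carc_mem i d x : x \in carc i d -> x \in c.
Proof.
elim: d i => [|d IH] i /=; first by rewrite inE => /eqP ->; apply: cc_mem.
by rewrite inE => /orP[/eqP ->|]; [apply: cc_mem | apply: IH].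
Qed.

Lemma curve_edgeC u v : curve_edge c u v = curve_edge c v u.
Proof. by rewrite /curve_edge orbC. Qed.

Lemma carc_steps i d u v : (u, v) \in steps (carc i d) -> curve_edge c u v.
Proof.
elim: d i => [|d IH] i //=.
rewrite carc_head /= stepsS -carc_head in_cons => /orP[/eqP [-> ->]|].
  exact: cc_edge.
exact: IH.
Qed.

Lemma carc_edge i d u v : path_edge (carc i d) u v -> curve_edge c u v.
Proof.
by case/orP=> /carc_steps //; rewrite curve_edgeC.
Qed.

Lemma carc_nil i d : carc i d != [::].
Proof. by case: d. Qed.

Definition fd (x y : nat) := ((y + n - x) %% n)%N.

Lemma fd_end x y : (x < n)%N -> (y < n)%N -> ((x + fd x y) %% n = y)%N.
Proof.
move=> hx hy; rewrite /fd modnDmr addnC subnK; last by rewrite (leq_trans (ltnW hx)) // leq_addl.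
by rewrite modnDr modn_small.
Qed.

Lemma fd_small x y : (x <= y)%N -> (y < n)%N -> fd x y = (y - x)%N.
Proof.
move=> hxy hy; rewrite /fd addnC -addnBA // addnC modnDr modn_small //.
exact: leq_ltn_trans (leq_subr _ _) hy.
Qed.

Lemma fd_le x y : (fd x y <= y + n - x)%N.
Proof. exact: leq_mod. Qed.

End Curve.

Lemma perm_swap2 (a b : nat) t : perm_eq (a :: b :: t) (b :: a :: t).
Proof. exact: permEl (perm_catCA [:: a] [:: b] t). Qed.

Lemma arith1 (a b p f s m n : nat) :
  (a + b <= n + s + m -> a + (p + f) + b <= n + (p + s) + (f + m))%N.
Proof. lia. Qed.

Section Main.
Variable c : seq pt.
Hypothesis Hc : simple_closed_curve c.
Local Notation n := (size c).

Definition ends P := [:: index (startp P) c; index (endp P) c].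
Definition EL L := flatten (map ends L).
Definition good P := [&& is_path P, startp P \in c & endp P \in c].
Definition flatM (M : seq (nat * nat)) := flatten (map (fun p => [:: p.1; p.2]) M).
Definition costM M := (\sum_(p <- M) fd c p.1 p.2)%N.
Definition sumL L := (\sum_(P <- L) len P)%N.

Definition covers (L : seq (seq pt)) (Q : seq pt) := forall P, P \in L ->
  {subset P <= Q} /\ (forall u v, path_edge P u v -> path_edge Q u v).
Definition within (L : seq (seq pt)) (Q : seq pt) :=
  (forall x, x \in Q -> x \in c \/ exists2 P, P \in L & x \in P) /\
  (forall u v, path_edge Q u v -> curve_edge c u v \/ exists2 P, P \in L & path_edge P u v).

Lemma good_nil P : good P -> P != [::].
Proof. by case: P. Qed.

Lemma EL_perm L L' : perm_eq L L' -> perm_eq (EL L) (EL L').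
Proof. by move=> h; apply: perm_flatten; apply: perm_map. Qed.
Arguments EL_perm {L L'}.

Definition same P0 P := [/\ good P0, len P0 = len P, P0 =i P,
  (forall u v, path_edge P0 u v = path_edge P u v) & perm_eq (ends P0) (ends P)].

Lemma same_rev P0 P : same P0 P -> same (rev P0) P.
Proof.
case=> [/and3P[h1 h2 h3] hl hm he hp]; split.
- by rewrite /good rev_start rev_end h2 h3 rev_is_path.
- by rewrite rev_len.
- by move=> z; rewrite mem_rev hm.
- by move=> u v; rewrite rev_edge he.
- apply: perm_trans hp; rewrite /ends rev_start rev_end.
  exact: permEl (perm_catC [:: _] [:: _]).
Qed.

Lemma orient P y : good P -> y \in ends P ->
  exists P0, same P0 P /\ index (startp P0) c = y.
Proof.
move=> g; rewrite !inE => /orP[/eqP ->|/eqP ->].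
  by exists P; split.
exists (rev P); split; last by rewrite rev_start.
by apply: same_rev.
Qed.
Arguments orient {P y}.

Lemma orient_end P y : good P -> y \in ends P ->
  exists P0, same P0 P /\ index (endp P0) c = y.
Proof.
move=> g /(orient g) [P0 [hs hy]]; exists (rev P0); split.
  exact: same_rev.
by rewrite rev_end.
Qed.
Arguments orient_end {P y}.

Lemma main k : forall L M, size L = k -> all good L -> perm_eq (flatM M) (EL L) ->
  exists Q, [/\ is_path Q, (len Q <= n + sumL L + costM M)%N, {subset c <= Q},
     covers L Q & within L Q].
Proof.
elim: k => [|k IH] L M.
  case: L => // _ _ _.
  case/and3P: (Hc) => _ _.
  case E: c => [|x c'] hcyc; first by move: (Hc); rewrite /simple_closed_curve E.
  exists (x :: rcons c' x); split.
  - exact: hcyc.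
  - by rewrite /len /= size_rcons -addnA leq_addr.
  - by move=> z; rewrite -rcons_cons mem_rcons inE orbC => ->.
  - by [].
  have hst : steps (x :: rcons c' x) = curve_edges c.
    rewrite /steps /curve_edges E rot1_cons /= -rcons_cons -cats1.
    by rewrite -[rcons c' x]cats0 zip_cat ?cats0 // size_rcons.
  split.
  - move=> z; rewrite -rcons_cons mem_rcons inE => /orP[/eqP ->|]; left;
      by rewrite E ?mem_head.
  - by move=> u v; rewrite /path_edge hst => h; left.
move=> hsz hgood hperm.
have hLn : L != [::] by move: hsz; case: (L).
case: M hperm => [|[x y] M'] hperm.
  by move: hperm hLn; case: (L) => // P L'; rewrite perm_sym => /perm_size.
have hxE : x \in EL L by rewrite -(perm_mem hperm) mem_head.
case/flatten_mapP: hxE => P hPL hxP.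
have gP : good P by apply: (allP hgood).
case: (orient_end gP hxP) => P0 [[gP0 lP0 mP0 eP0 pP0] hx].
set w := index (startp P0) c.
set R := rem P L.
have hLR : perm_eq L (P :: R) by apply: perm_to_rem.
have hRL : {subset R <= L} by apply: mem_rem.
have gR : all good R by apply/allP => Q hQ; apply: (allP hgood); apply: hRL.
have hszR : size R = k by rewrite /R size_rem // hsz.
have hsumL : sumL L = (len P + sumL R)%N by rewrite /sumL (perm_big _ hLR) big_cons.
have hcost : costM ((x, y) :: M') = (fd c x y + costM M')%N by rewrite /costM big_cons.
have hperm1 : perm_eq (y :: flatM M') (w :: EL R).
  rewrite -(perm_cons x); apply: (perm_trans hperm); apply: (perm_trans (EL_perm hLR)).
  rewrite /EL /= -/(EL R); apply: (perm_trans _ (perm_swap2 _ _ _)).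
  have -> : [:: w, x & EL R] = ends P0 ++ EL R by rewrite /ends hx.
  by rewrite -[[:: _, _ & _]]/(ends P ++ EL R) perm_cat2r perm_sym.
case/and3P: gP0 => pathP0 sP0 eP0c.
have hxn : (x < n)%N by rewrite -hx index_mem.
have hwn : (w < n)%N by rewrite index_mem.
have P0nil : P0 != [::] by case: (P0) pathP0.
have hLmem : forall Q, Q \in L -> Q = P \/ Q \in R.
  by move=> Q; rewrite (perm_mem hLR) inE => /orP[/eqP|]; [left|right].
have hP0ar : forall d, endp P0 = startp (carc c x d).
  by move=> d; rewrite carc_start modn_small // -hx nth_index.
case: (eqVneq y w) => hyw.
- (* closing a loop *)
  rewrite hyw in hperm1 hcost; rewrite perm_cons in hperm1.
  have [Q' [pQ' lQ' sQ' cQ' wQ']] := IH R M' hszR gR hperm1.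
  set cw := startp P0.
  have cwQ : cw \in Q' by apply: sQ'.
  move: pQ' lQ' sQ' cQ' wQ'.
  case/splitPr: cwQ => Q1 Q2 pQ' lQ' sQ' cQ' wQ'.
  rewrite split_join in pQ' lQ' sQ' cQ' wQ'.
  set ar := carc c x (fd c x w).
  set Z := join P0 ar.
  have hA : rcons Q1 cw != [::] by case: (Q1).
  have hB : cw :: Q2 != [::] by [].
  have hAB : endp (rcons Q1 cw) = startp (cw :: Q2) by rewrite /endp last_rcons.
  have hZ : Z != [::] by apply: joinW_nil.
  have harn : ar != [::] by apply: carc_nil.
  have hJ : endp P0 = startp ar := hP0ar _.
  have hZs : startp Z = cw by rewrite joinW_start.
  have hZe : endp Z = cw by rewrite joinW_end // carc_end fd_end // nth_index.
  have hAZ : endp (rcons Q1 cw) = startp Z by rewrite hZs /endp last_rcons.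
  have hAZn : join (rcons Q1 cw) Z != [::] by apply: joinW_nil.
  have hAZB : endp (join (rcons Q1 cw) Z) = startp (cw :: Q2) by rewrite joinW_end.
  have [pA pB] := joinW_path_inv hA hB hAB pQ'.
  have memQ : forall z, z \in join (join (rcons Q1 cw) Z) (cw :: Q2) =
     [|| z \in rcons Q1 cw, (z \in P0) || (z \in ar) | z \in cw :: Q2].
    by move=> z; rewrite joinW_mem // joinW_mem // /Z joinW_mem // -orbA.
  have edgeQ : forall u v, path_edge (join (join (rcons Q1 cw) Z) (cw :: Q2)) u v =
     [|| path_edge (rcons Q1 cw) u v, path_edge P0 u v || path_edge ar u v
       | path_edge (cw :: Q2) u v].
    by move=> u v; rewrite joinW_edge // joinW_edge // /Z joinW_edge // -orbA.
  exists (join (join (rcons Q1 cw) Z) (cw :: Q2)); split.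
  + apply: joinW_path => //; apply: joinW_path => //.
    by apply: joinW_path => //; apply: carc_path.
  + rewrite joinW_len // in lQ'; rewrite joinW_len // joinW_len // /Z joinW_len // carc_len lP0 hsumL hyw hcost.
    move: lQ'; move: (len (rcons Q1 cw)) (len (cw :: Q2)) (len P) (fd c x w) (sumL R) (costM M') => a b p f s m; apply: arith1.
  + move=> z /sQ'; rewrite joinW_mem // memQ => /orP[->|->] //; by rewrite !orbT.
  + move=> Q hQ; case: (hLmem Q hQ) => [->|hQR]; split.
    * by move=> z; rewrite -mP0 memQ => ->; rewrite orbT.
    * by move=> u v; rewrite -eP0 edgeQ => ->; rewrite orbT.
    * move=> z /(proj1 (cQ' Q hQR)); rewrite joinW_mem // memQ => /orP[->|->] //.
      by rewrite !orbT.
    * move=> u v /(proj2 (cQ' Q hQR)); rewrite joinW_edge // edgeQ => /orP[->|->] //.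
      by rewrite !orbT.
  + case: wQ' => wv we; split.
    * move=> z; rewrite memQ => /or3P[h|/orP[h|h]|h].
      - case: (wv z); first by rewrite joinW_mem // h.
          by left.
        by case=> Q hQ hz; right; exists Q => //; apply: hRL.
      - by right; exists P => //; rewrite -mP0.
      - by left; apply: carc_mem h.
      - case: (wv z); first by rewrite joinW_mem // h orbT.
          by left.
        by case=> Q hQ hz; right; exists Q => //; apply: hRL.
    * move=> u v; rewrite edgeQ => /or3P[h|/orP[h|h]|h].
      - case: (we u v); first by rewrite joinW_edge // h.
          by left.
        by case=> Q hQ hz; right; exists Q => //; apply: hRL.
      - by right; exists P => //; rewrite -eP0.
      - by left; apply: carc_edge h.
      - case: (we u v); first by rewrite joinW_edge // h orbT.
          by left.
        by case=> Q hQ hz; right; exists Q => //; apply: hRL.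
(* merging two chords *)
have hyR : y \in EL R.
  have : y \in w :: EL R by rewrite -(perm_mem hperm1) mem_head.
  by rewrite inE (negbTE hyw).
case/flatten_mapP: hyR => P' hP'R hyP'.
have gP' : good P' by apply: (allP gR).
case: (orient gP' hyP') => P1 [[gP1 lP1 mP1 eP1 pP1] hy].
set z := index (endp P1) c.
set R' := rem P' R.
have hRR : perm_eq R (P' :: R') by apply: perm_to_rem.
have hRR' : {subset R' <= R} by apply: mem_rem.
have gR' : all good R' by apply/allP => Q hQ; apply: (allP gR); apply: hRR'.
have hRmem : forall Q, Q \in R -> Q = P' \/ Q \in R'.
  by move=> Q; rewrite (perm_mem hRR) inE => /orP[/eqP|]; [left|right].
have hsumR : sumL R = (len P' + sumL R')%N by rewrite /sumL (perm_big _ hRR) big_cons.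
have hperm2 : perm_eq (flatM M') (w :: z :: EL R').
  rewrite -(perm_cons y); apply: (perm_trans hperm1).
  apply: (perm_trans _ (perm_swap2 _ _ _)); rewrite perm_cons.
  apply: (perm_trans (EL_perm hRR)); rewrite /EL /= -/(EL R').
  have -> : [:: y, z & EL R'] = ends P1 ++ EL R' by rewrite /ends hy.
  by rewrite -[[:: _, _ & EL R']]/(ends P' ++ EL R') perm_cat2r perm_sym.
case/and3P: gP1 => pathP1 sP1 eP1c.
have P1nil : P1 != [::] by case: (P1) pathP1.
set ar := carc c x (fd c x y).
have harn : ar != [::] by apply: carc_nil.
have hJ2 : endp P0 = startp ar := hP0ar _.
set P2 := join (join P0 ar) P1.
have hyn : (y < n)%N by rewrite -hy index_mem.
have h01 : endp (join P0 ar) = startp P1.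
  by rewrite joinW_end // /ar carc_end fd_end // -hy nth_index.
have h0n : join P0 ar != [::] by apply: joinW_nil.
have P2s : startp P2 = startp P0 by rewrite joinW_start // joinW_start.
have P2e : endp P2 = endp P1 by rewrite joinW_end.
have gP2 : good P2.
  rewrite /good P2s P2e sP0 eP1c !andbT.
  by apply: joinW_path => //; apply: joinW_path => //; apply: carc_path.
have hmem2 : forall t, (t \in P2) = [|| t \in P0, t \in ar | t \in P1].
  by move=> t; rewrite /P2 joinW_mem // joinW_mem // -orbA.
have hedge2 : forall u v, path_edge P2 u v = [|| path_edge P0 u v, path_edge ar u v | path_edge P1 u v].
  by move=> u v; rewrite /P2 joinW_edge // joinW_edge // -orbA.
have hlen2 : len P2 = (len P0 + fd c x y + len P1)%N.
  by rewrite /P2 joinW_len // joinW_len // carc_len.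
have hszL' : size (P2 :: R') = k.
  rewrite /= /R' size_rem // -hszR prednK //.
  by rewrite lt0n size_eq0; apply/eqP => h; rewrite h in hP'R.
have arith2 : forall a b p f q s m : nat,
  (a <= n + (b + s) + m -> b = p + f + q -> a <= n + (p + (q + s)) + (f + m))%N.
  by move=> a b p f q s m h e; subst b; move: h; clear; lia.
have gL' : all good (P2 :: R') by rewrite /= gP2 gR'.
have hpermL' : perm_eq (flatM M') (EL (P2 :: R')).
  by rewrite /EL /= -/(EL R') /ends P2s P2e.
have [Q [pQ lQ sQ cQ wQ]] := IH _ _ hszL' gL' hpermL'.
exists Q; split => //.
- rewrite hsumL hsumR hcost; move: lQ; rewrite /sumL big_cons -/(sumL R') => h.
  by apply: arith2 h _; rewrite hlen2 lP0 lP1.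
- have c2 := cQ P2 (mem_head _ _).
  move=> Q0 hQ0; case: (hLmem Q0 hQ0) => [->|].
    split.
    + by move=> t; rewrite -mP0 => ht; apply: (proj1 c2); rewrite hmem2 ht.
    + by move=> u v; rewrite -eP0 => ht; apply: (proj2 c2); rewrite hedge2 ht.
  move=> /hRmem [->|hQ'].
    split.
    + by move=> t; rewrite -mP1 => ht; apply: (proj1 c2); rewrite hmem2 ht !orbT.
    + by move=> u v; rewrite -eP1 => ht; apply: (proj2 c2); rewrite hedge2 ht !orbT.
  by apply: cQ; rewrite inE hQ' orbT.
- case: wQ => wv we; split.
  + move=> t /wv [->|[Q0]]; first by left.
    rewrite inE => /orP[/eqP ->|hQ0] ht; last first.
      by right; exists Q0 => //; apply: hRL; apply: hRR'.
    move: ht; rewrite hmem2 => /or3P[h|h|h].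
    * by right; exists P => //; rewrite -mP0.
    * by left; apply: carc_mem h.
    * by right; exists P'; [apply: hRL | rewrite -mP1].
  + move=> u v /we [->|[Q0]]; first by left.
    rewrite inE => /orP[/eqP ->|hQ0] ht; last first.
      by right; exists Q0 => //; apply: hRL; apply: hRR'.
    move: ht; rewrite hedge2 => /or3P[h|h|h].
    * by right; exists P => //; rewrite -eP0.
    * by left; apply: carc_edge h.
    * by right; exists P'; [apply: hRL | rewrite -eP1].
Qed.

End Main.

Fixpoint pA (s : seq nat) : seq (nat * nat) :=
  match s with a :: b :: t => (a, b) :: pA t | _ => [::] end.
Fixpoint pB (x : nat) (l : seq nat) : seq (nat * nat) :=
  match l with
  | a :: b :: t => (a, b) :: pB x t
  | [:: a] => [:: (a, x)]
  | [::] => [::]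
  end.
Fixpoint cA (s : seq nat) : nat :=
  match s with a :: b :: t => (b - a + cA t)%N | _ => 0%N end.

Lemma flat_pA s : ~~ odd (size s) -> flatM (pA s) = s.
Proof.
move: s; fix IH 1; case => [|a [|b t]] //= h.
by rewrite /flatM /= -/(flatM _) IH // ; rewrite negbK in h.
Qed.

Lemma flat_pB x l : odd (size l) -> flatM (pB x l) = rcons l x.
Proof.
move: l; fix IH 1; case => [|a [|b t]] //= h.
by rewrite /flatM /= -/(flatM _) IH //; rewrite negbK in h.
Qed.

Lemma le_last y l : path leq y l -> (y <= last y l)%N.
Proof.
elim: l y => [|z l IH] y //= /andP[h1 h2].
exact: leq_trans h1 (IH _ h2).
Qed.
Arguments le_last {y l}.

Lemma tele x l : sorted leq (x :: l) -> (cA (x :: l) + cA l = last x l - x)%N.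
Proof.
elim: l x => [|y l IH] x /=; first by rewrite subnn.
move=> /andP[hxy hp].
have := IH y hp; have := le_last hp.
case: l IH hp => [|z l] _ /= hp; first by lia.
lia.
Qed.

Section Cost.
Variable c : seq pt.
Local Notation n := (size c).

Lemma cost_pA s : sorted leq s -> all (fun i => i < n)%N s -> costM c (pA s) = cA s.
Proof.
move: s; fix IH 1; case => [|a [|b t]] /=; try by rewrite /costM big_nil.
move=> /andP[hab hs] /andP[ha /andP[hb ht]].
rewrite /costM big_cons -/(costM _ _) fd_small // IH //.
by case: t hs {ht} => //= u t /andP[].
Qed.

Lemma cost_pB x l : sorted leq l -> all (fun i => i < n)%N l ->
  (costM c (pB x l) <= cA l + (x + n - last x l))%N.
Proof.
have [N] := ubnP (size l); elim: N l => // N IH [|a [|b t]] /= hsz.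
- by rewrite /costM big_nil.
- by move=> _ _; rewrite /costM big_cons big_nil /= addn0 add0n; apply: fd_le.
move=> /andP[hab hs] /andP[ha /andP[hb ht]].
rewrite /costM big_cons -/(costM _ _) fd_small //.
case: t hsz hs ht => [|u t] hsz hs ht.
  by rewrite /costM big_nil /=; lia.
have hs' : sorted leq (u :: t) by case/andP: hs.
have hsz' : (size (u :: t) < N)%N by move: hsz => /=; lia.
have := IH _ hsz' hs' ht.
simpl; lia.
Qed.

End Cost.

Lemma EL_even c L : ~~ odd (size (EL c L)).
Proof.
elim: L => [//|P L IH].
by rewrite /EL /= -/(EL c L) negbK in IH *.
Qed.

Lemma EL_lt c L : all (good c) L -> all (fun i => i < size c)%N (EL c L).
Proof.
move=> /allP h; apply/allP => i /flatten_mapP [P hP].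
case/and3P: (h P hP) => _ h1 h2.
by rewrite !inE => /orP[/eqP ->|/eqP ->]; rewrite index_mem.
Qed.

Lemma arith3 (a b n cl x cl' : nat) :
  (a <= cl + (x + n - b))%N -> (x <= b)%N -> (b < n)%N ->
  (cl' + cl = b - x)%N -> (cl' + a <= n)%N.
Proof. move=> *; lia. Qed.

Lemma matching c S : all (good c) S ->
  exists M, perm_eq (flatM M) (EL c S) /\ (2 * costM c M <= size c)%N.
Proof.
move=> gS.
set s := sort leq (EL c S).
have ps : perm_eq s (EL c S) by apply: permEl; apply: perm_sort.
have ss : sorted leq s by apply: sort_sorted; exact: leq_total.
have als : all (fun i => i < size c)%N s by rewrite (perm_all _ ps) EL_lt.
have es : ~~ odd (size s) by rewrite (perm_size ps) EL_even.
move: ps ss als es; case: s => [|x l] ps ss als es.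
  by exists [::]; split => //; rewrite /costM big_nil.
have fA : flatM (pA (x :: l)) = x :: l by apply: flat_pA.
have fB : flatM (pB x l) = rcons l x by apply: flat_pB; move: es; rewrite /= negbK.
have cA' : costM c (pA (x :: l)) = cA (x :: l) by apply: cost_pA.
have cB' := cost_pB c x l (path_sorted ss) (proj2 (andP als)).
have tl := tele x l ss.
have hxl : (x <= last x l)%N := le_last ss.
have hln : (last x l < size c)%N by apply: (allP als); apply: mem_last.
have tot : (costM c (pA (x :: l)) + costM c (pB x l) <= size c)%N.
  rewrite cA'; move: cB' hxl hln tl; clear; lia.
case: (leqP (costM c (pA (x :: l))) (costM c (pB x l))) => h.
  exists (pA (x :: l)); split; first by rewrite fA.
  by move: tot h; clear; lia.
exists (pB x l); split; first by rewrite fB; apply: perm_trans ps; apply: permEl; apply: perm_rcons.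
by move: tot h; clear; lia.
Qed.

Local Open Scope ring_scope.

Theorem lemma2p6 (c : seq pt) (S : seq (seq pt)) :
  simple_closed_curve c ->
  (forall P, P \in S -> path_in c P) ->
  (forall P, P \in S -> (startp P \in c) && (endp P \in c)) ->
  (forall i j : nat, (i < size S)%N -> (j < size S)%N -> i <> j ->
     ~~ essential_crossing c (nth [::] S i) (nth [::] S j)) ->
  exists Q : seq pt,
    [/\ is_path Q,
        ((len Q)%:R : rat) <= 3%:R / 2%:R * (curve_len c)%:R
                              + (\sum_(P <- S) len P)%:R &
      [/\
        (forall P x, P \in S -> x \in P -> x \in Q),
        (forall P u v, P \in S -> path_edge P u v -> path_edge Q u v),
        (forall x, x \in Q -> (exists2 P, P \in S & x \in P) \/ x \in c) &
        (forall u v, path_edge Q u v ->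
           (exists2 P, P \in S & path_edge P u v) \/ curve_edge c u v)]].
Proof.
move=> Hc hpath hends _.
have gS : all (good c) S.
  apply/allP => P hP; rewrite /good.
  case/andP: (hends P hP) => -> ->; case/andP: (hpath P hP) => -> _; done.
have [M [hM hcM]] := matching c S gS.
have [Q [pQ lQ sQ cQ wQ]] := main c Hc (size S) S M (erefl (size S)) gS hM.
exists Q; split => //.
- have h1 : ((len Q)%:R : rat) <= (size c + sumL S + costM c M)%N%:R by rewrite ler_nat.
  have h2 : ((2 * costM c M)%N%:R : rat) <= (size c)%:R by rewrite ler_nat.
  rewrite !natrD in h1; rewrite natrM in h2.
  have -> : (\sum_(P <- S) len P)%R = sumL S by [].
  rewrite /curve_len.
  lra.
- split.
  + by move=> P x hP hx; apply: (proj1 (cQ P hP)).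
  + by move=> P u v hP he; apply: (proj2 (cQ P hP)).
  + by move=> x hx; case: (proj1 wQ x hx) => h; [right|left].
  + by move=> u v he; case: (proj2 wQ u v he) => h; [right|left].
Qed.
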